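(* Let $n\ge1$, $N=\{1,\dots,n\}$, $A=(a_{ij})\in[0,1]^{n\times n}$, $b=(b_1,\dots,b_n)$ with $b_i>0$, assume $\check\alpha_j\le1$ for all $j\in N$, and let $\lambda\in[0,+\infty)$. Let $p=(p_1,\dots,p_n)\in P$ and let $x\in[0,1]^n$ satisfy $$\begin{cases} x_j=d_{0j}=1 & \text{for all } j\in N^*,\\ d_{(p_j-1)j}\le x_j\le d_{p_jj} & \text{for all } j\in N\setminus N^*,\\ \sum_{j\in N^*}a_{ij}+\sum_{j\in N\setminus N^*}\big[\gamma_{ij}\,x_j+(1-\gamma_{ij})\,a_{ij}\big]\ge b_i & \text{for all } i\in N,\\ \sum_{j\in N^*}a_{ij}+\sum_{j\in N\setminus N^*}\big[\gamma_{ij}\,x_j+(1-\gamma_{ij})\,a_{ij}\big]=\lambda x_i & \text{for all } i\in N.\end{cases}$$ Then $x\in V^*(A,\lambda)$.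
   Context: $\theta=(0,\dots,0)$. For $x\in[0,1]^n$, $(A\odot x^T)_i=\sum_{j\in N}\min\{a_{ij},x_j\}$. $V^*(A,\lambda)=\{x\in[0,1]^n: (A\odot x^T)_i\ge b_i \text{ and } (A\odot x^T)_i=\lambda x_i \text{ for all } i\in N,\ x\neq\theta\}$. $\check\alpha_j=\max\big(\{0\}\cup\{b_i-\sum_{k\in N\setminus\{j\}}a_{ik}: i\in N\}\big)$. $D_j=\{d_{0j}<\dots<d_{l_jj}\}$ is the set $\{\check\alpha_j\}\cup\{a_{ij}: i\in N,\ a_{ij}\ge\check\alpha_j\}\cup\{1\}$ listed increasingly. $N^*=\{j\in N:\check\alpha_j=1\}$; $P_j=\{0\}$ for $j\in N^*$ and $P_j=\{1,\dots,l_j\}$ (indices with $d_{pj}>\check\alpha_j$) for $j\in N\setminus N^*$; $P=P_1\times\dots\times P_n$. For $p\in P$, $i\in N$, $j\in N\setminus N^*$: $\gamma_{ij}=1$ if $d_{p_jj}\le a_{ij}$ and $\gamma_{ij}=0$ if $a_{ij}\le d_{(p_j-1)j}$. *)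

(* Defs.v *)
(* Indices N = {1..n} are rendered as 'I_n (0-based). *)
From mathcomp Require Import all_boot all_order all_algebra.
Set Implicit Arguments. Unset Strict Implicit. Unset Printing Implicit Defensive.
Import Order.TTheory GRing.Theory Num.Theory.
Local Open Scope ring_scope.

Section Defs.
Variables (R : realFieldType) (n : nat).

Definition odot (A : 'M[R]_n) (x : 'I_n -> R) (i : 'I_n) : R :=
  \sum_(j < n) Num.min (A i j) (x j).

Definition Vstar (A : 'M[R]_n) (b : 'I_n -> R) (lam : R) (x : 'I_n -> R) : Prop :=
  (forall j, 0 <= x j <= 1) /\
  (forall i, b i <= odot A x i) /\
  (forall i, odot A x i = lam * x i) /\
  (exists j, x j != 0).

Definition alpha_check (A : 'M[R]_n) (b : 'I_n -> R) (j : 'I_n) : R :=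
  \big[Num.max/0]_(i < n) (b i - \sum_(k < n | k != j) A i k).

(* D_j = {alpha_j} ∪ {a_ij : a_ij >= alpha_j} ∪ {1}, listed increasingly
   (as a duplicate-free sorted sequence d_0j < ... < d_{l_j j}). *)
Definition Dseq (A : 'M[R]_n) (b : 'I_n -> R) (j : 'I_n) : seq R :=
  sort <=%R (undup (alpha_check A b j
     :: [seq A i j | i <- enum 'I_n & alpha_check A b j <= A i j] ++ [:: 1])).

Definition dval (A : 'M[R]_n) (b : 'I_n -> R) (p : nat) (j : 'I_n) : R :=
  nth 0 (Dseq A b j) p.

Definition lidx (A : 'M[R]_n) (b : 'I_n -> R) (j : 'I_n) : nat :=
  (size (Dseq A b j)).-1.

Definition inNstar (A : 'M[R]_n) (b : 'I_n -> R) (j : 'I_n) : bool :=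
  alpha_check A b j == 1.

Definition inP (A : 'M[R]_n) (b : 'I_n -> R) (p : 'I_n -> nat) : Prop :=
  forall j, if inNstar A b j then p j = 0%N
            else (1 <= p j <= lidx A b j)%N.

(* gamma_ij = 1 if d_{p_j j} <= a_ij, and 0 if a_ij <= d_{(p_j-1) j}
   (exactly one of these holds, since consecutive elements of D_j are
   strictly increasing and every a_ij >= alpha_j belongs to D_j). *)
Definition gamma (A : 'M[R]_n) (b : 'I_n -> R) (p : 'I_n -> nat) (i j : 'I_n) : R :=
  if dval A b (p j) j <= A i j then 1 else 0.

End Defs.

(* Main.v *)
Require Import Defs.
From mathcomp Require Import all_boot all_order all_algebra.
From mathcomp Require Import zify.
Import Order.TTheory GRing.Theory Num.Theory.
Local Open Scope ring_scope.

Lemma key (R : realFieldType) (n : nat) (A : 'M[R]_n) (b : 'I_n -> R) (q : nat) (i j : 'I_n) :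
  alpha_check A b j <= 1 -> (q < size (Dseq A b j))%N ->
  A i j < dval A b q.+1 j -> A i j <= dval A b q j.
Proof.
move=> a1 hq hlt.
set s := Dseq A b j.
have ss : sorted <=%R s by apply: sort_sorted; exact: le_total.
have hle := sorted_leq_nth (@le_trans _ R) (@lexx _ R) 0 ss.
have mems : forall y, (y \in s) = (y \in (alpha_check A b j
     :: [seq A i j | i <- enum 'I_n & alpha_check A b j <= A i j] ++ [:: 1])).
  by move=> y; rewrite /s /Dseq mem_sort mem_undup.
have lowb : forall y, y \in s -> alpha_check A b j <= y.
  move=> y; rewrite mems inE mem_cat inE => /orP[/eqP->//|/orP[|/eqP->//]].
  by case/mapP=> k; rewrite mem_filter => /andP[hk _] ->.
have nq : nth 0 s q \in s by apply: mem_nth.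
case: (lerP (alpha_check A b j) (A i j)) => ha; last first.
  by apply/ltW/(lt_le_trans ha)/lowb.
have inA : A i j \in s.
  rewrite mems inE mem_cat; apply/orP; right; apply/orP; left.
  by apply/mapP; exists i => //; rewrite mem_filter ha mem_enum.
have hk := index_mem (A i j) s; rewrite inA in hk.
case: (leqP (index (A i j) s) q) => hiq.
  rewrite /dval -/s -{1}(nth_index 0 inA); exact: hle.
move: hlt; rewrite /dval -/s -{1}(nth_index 0 inA) => hlt.
have := hle q.+1 (index (A i j) s) (leq_ltn_trans hiq hk) hk hiq.
by rewrite leNgt hlt.
Qed.

Theorem theorem4p3 (R : realFieldType) (n : nat) (A : 'M[R]_n) (b : 'I_n -> R)
    (lam : R) (p : 'I_n -> nat) (x : 'I_n -> R) :
  (0 < n)%N ->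
  (forall i j, 0 <= A i j <= 1) ->
  (forall i, 0 < b i) ->
  (forall j, alpha_check A b j <= 1) ->
  0 <= lam ->
  inP A b p ->
  (forall j, 0 <= x j <= 1) ->
  (forall j, inNstar A b j -> x j = dval A b 0 j /\ x j = 1) ->
  (forall j, ~~ inNstar A b j ->
     dval A b (p j).-1 j <= x j <= dval A b (p j) j) ->
  (forall i,
     b i <= \sum_(j < n | inNstar A b j) A i j
            + \sum_(j < n | ~~ inNstar A b j)
                (gamma A b p i j * x j + (1 - gamma A b p i j) * A i j)) ->
  (forall i,
     \sum_(j < n | inNstar A b j) A i j
       + \sum_(j < n | ~~ inNstar A b j)
           (gamma A b p i j * x j + (1 - gamma A b p i j) * A i j)
     = lam * x i) ->
  Vstar A b lam x.
Proof.
move=> n0 hA hb hal hlam hp hx hstar hnstar hge heq.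
have E : forall i, odot A x i = \sum_(j < n | inNstar A b j) A i j
       + \sum_(j < n | ~~ inNstar A b j)
           (gamma A b p i j * x j + (1 - gamma A b p i j) * A i j).
  move=> i; rewrite /odot (bigID (inNstar A b)) /=; congr (_ + _).
    apply: eq_bigr => j hj; have [_ ->] := hstar j hj.
    by apply: min_l; case/andP: (hA i j).
  apply: eq_bigr => j hj; have := hp j; rewrite (negbTE hj) => /andP[p1 pl].
  have [h1 h2] := andP (hnstar j hj).
  rewrite /gamma; case: ifP => hg.
    rewrite mul1r subrr mul0r addr0; apply: min_r; exact: le_trans h2 hg.
  rewrite mul0r subr0 mul1r add0r; apply: min_l.
  apply: le_trans h1; move: hg; rewrite -(prednK p1) /= => /negbT; rewrite -ltNge => hg.
  apply: key => //; rewrite /lidx in pl.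
  have sz : (0 < size (Dseq A b j))%N.
    by move: pl p1; case: (size (Dseq A b j)) => //= ; case: (p j).
  move: sz pl p1; set m := size _; set k := p j; clear; lia.
split => //; split; first by move=> i; rewrite E.
split; first by move=> i; rewrite E.
exists (Ordinal n0); apply/eqP => h0.
have := hge (Ordinal n0); rewrite heq h0 mulr0 => hle.
by have := hb (Ordinal n0); rewrite ltNge hle.
Qed.
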